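(* Every even-dimensional finite-dimensional real Lie algebra $\mathfrak g$ with $\dim[\mathfrak g,\mathfrak g]=1$ carries an abelian complex structure.
   Context: An abelian complex structure on a real Lie algebra $\mathfrak g$ is a linear map $J:\mathfrak g\to\mathfrak g$ with $J^2=-\mathrm{Id}$ and $[Jx,Jy]=[x,y]$ for all $x,y\in\mathfrak g$. *)

(* Defs.v *)
From HB Require Import structures.
From mathcomp Require Import all_boot all_order all_algebra.
From mathcomp Require Import reals.
Set Implicit Arguments. Unset Strict Implicit. Unset Printing Implicit Defensive.
Import Order.TTheory GRing.Theory Num.Theory.
Local Open Scope ring_scope.

Definition is_lie_bracket (R : realType) (n : nat)
  (br : 'rV[R]_n -> 'rV[R]_n -> 'rV[R]_n) : Prop :=
  [/\ (forall (a : R) x y z, br (a *: x + y) z = a *: br x z + br y z),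
      (forall (a : R) x y z, br z (a *: x + y) = a *: br z x + br z y),
      (forall x, br x x = 0) &
      (forall x y z, br x (br y z) + br y (br z x) + br z (br x y) = 0)].

(* The derived algebra [g,g], as a row space: the span of all brackets
   (by bilinearity, spanned by the brackets of standard basis vectors). *)
Definition derived_space (R : realType) (n : nat)
  (br : 'rV[R]_n -> 'rV[R]_n -> 'rV[R]_n) : 'M[R]_n :=
  (\sum_(i < n) \sum_(j < n) <<br (delta_mx 0 i) (delta_mx 0 j)>>)%MS.

Definition abelian_complex_structure (R : realType) (n : nat)
  (br : 'rV[R]_n -> 'rV[R]_n -> 'rV[R]_n) (J : 'M[R]_n) : Prop :=
  J *m J = - 1%:M /\ (forall x y, br (x *m J) (y *m J) = br x y).

(* Main.v *)
Require Import Defs.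
From HB Require Import structures.
From mathcomp Require Import all_boot all_order all_algebra.
From mathcomp Require Import reals perm.
Set Implicit Arguments. Unset Strict Implicit.
Import Order.TTheory GRing.Theory Num.Theory.
Local Open Scope ring_scope.

Section Key.
Variable R : realType.

Definition acs_ok n (A J : 'M[R]_n) := J *m J = - 1%:M /\ J *m A *m J^T = A.

Lemma congr_ok n (P A J : 'M[R]_n) : P \in unitmx ->
  acs_ok (P *m A *m P^T) J -> acs_ok A (invmx P *m J *m P).
Proof.
move=> uP [hJ hA]; split.
  rewrite -!mulmxA (mulmxA P) mulmxV // mul1mx (mulmxA J) hJ.
  by rewrite mulNmx mul1mx mulmxN mulVmx.
rewrite !trmx_mul trmx_inv.
have -> : invmx P *m J *m P *m A *m (P^T *m (J^T *m invmx P^T))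
   = invmx P *m (J *m (P *m A *m P^T) *m J^T) *m invmx P^T by rewrite !mulmxA.
by rewrite hA !mulmxA mulVmx // mul1mx -mulmxA mulmxV ?mulmx1 // unitmx_tr.
Qed.

Definition J2 : 'M[R]_2 := \matrix_(i, j) (((i == 0) && (j == 1))%:R - ((i == 1) && (j == 0))%:R).

Lemma J2J2 : J2 *m J2 = -1%:M.
Proof.
apply/matrixP => i j; rewrite !mxE !big_ord_recl big_ord0 !mxE.
case: i => [[|[|i]]] //= ? ; case: j => [[|[|j]]] //= ?.
all: by rewrite !(subr0, sub0r, mul0r, mulr0, mul1r, mulr1, add0r, addr0, oppr0, mulrN, mulNr, opprK).
Qed.

Lemma J2tr : J2^T = - J2.
Proof.
apply/matrixP => i j; rewrite !mxE.
by case: i => [[|[|]]] //= ? ; case: j => [[|[|]]] //= ?; rewrite ?subr0 ?sub0r ?oppr0 ?opprK.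
Qed.


Lemma blk_ok k (a : R) (S J' : 'M[R]_k) : acs_ok S J' ->
  acs_ok (block_mx (a *: J2) 0 0 S : 'M_(2 + k)) (block_mx J2 0 0 J').
Proof.
move=> [h1 h2]; split.
  rewrite mulmx_block !mulmx0 !mul0mx !addr0 !add0r J2J2 h1.
  by rewrite [in RHS](@scalar_mx_block R 2 k 1) opp_block_mx !oppr0.
rewrite tr_block_mx !mulmx_block !trmx0 !mulmx0 !mul0mx !addr0 !add0r !mul0mx h2.
by rewrite J2tr -scalemxAr -scalemxAl J2J2 mulmxN mulNmx mul1mx opprK.
Qed.

Lemma skew_diag n (A : 'M[R]_n) i : A^T = -A -> A i i = 0.
Proof.
move=> sk; have := congr1 (fun M : 'M[R]_n => M i i) sk; rewrite !mxE => /eqP.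
by rewrite -addr_eq0 -mulr2n mulrn_eq0 /= => /eqP.
Qed.

Lemma skew_entry n (A : 'M[R]_n) i j : A^T = -A -> A j i = - A i j.
Proof. by move=> sk; have := congr1 (fun M : 'M[R]_n => M i j) sk; rewrite !mxE. Qed.


Lemma skew_tr n (A : 'M[R]_n) : A^T = -A -> forall i j, A^T i j = - A i j.
Proof. by move=> sk i j; rewrite sk mxE. Qed.

Lemma pivot k (B : 'M[R]_(2 + k)) :
  (forall S : 'M[R]_k, S^T = -S -> exists J, acs_ok S J) ->
  B^T = -B -> B (lshift k (0 : 'I_2)) (lshift k (1 : 'I_2)) != 0 ->
  exists J, acs_ok B J.
Proof.
move=> IH sk.
set a := B _ _ => nza.
set B11 := ulsubmx B; set B12 := ursubmx B; set B21 := dlsubmx B; set B22 := drsubmx B.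
have eB11 : B11 = a *: J2.
  apply/matrixP => i j; rewrite !mxE.
  case: i => [[|[|i]]] //= hi ; case: j => [[|[|j]]] //= hj.
  - by rewrite (bool_irrelevance hj hi) subrr mulr0 (skew_diag _ sk).
  - by rewrite subr0 mulr1 /a; congr (B (lshift k _) (lshift k _)); apply/val_inj.
  - rewrite sub0r mulrN1 /a (skew_entry _ _ sk).
    by congr (- B (lshift k _) (lshift k _)); apply/val_inj.
  - by rewrite (bool_irrelevance hj hi) subrr mulr0 (skew_diag _ sk).
have sk21 : B21^T = - B12.
  apply/matrixP => i j; rewrite !mxE; exact: skew_entry.
have sk12 : B12^T = - B21.
  apply/matrixP => i j; rewrite !mxE; exact: skew_entry.
have sk22 : B22^T = - B22.
  apply/matrixP => i j; rewrite !mxE; exact: skew_entry.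
set K := a^-1 *: J2.
set X := B21 *m K.
set S := X *m B12 + B22.
set P := block_mx 1%:M 0 X 1%:M : 'M[R]_(2 + k).
have hXB : X *m B11 + B21 = 0.
  rewrite /X /K eB11 -mulmxA -scalemxAl -!scalemxAr scalerA mulVf //.
  by rewrite scale1r J2J2 mulmxN mulmx1 addNr.
have hBX : B11 *m X^T + B12 = 0.
  rewrite /X /K trmx_mul sk21 linearZ /= J2tr eB11 mulmxA -!scalemxAl -!scalemxAr.
  rewrite -scalemxAl scalerA mulfV // scale1r !mulmxN J2J2 ?mulNmx opprK mul1mx ?opprK.
  by rewrite addNr.
have eB : B = block_mx B11 B12 B21 B22 by rewrite submxK.
have hP : P *m B *m P^T = block_mx (a *: J2) 0 0 S.
  rewrite {1}eB /P tr_block_mx !mulmx_block !trmx1 !trmx0.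
  rewrite !mul1mx !mul0mx !mulmx1 !mulmx0 !addr0 ?add0r hXB !mul0mx ?add0r ?addr0.
  by rewrite hBX eB11.
have skS : S^T = - S.
  rewrite /S /X /K linearD /= !trmx_mul sk12 sk22 sk21 linearZ /= J2tr.
  rewrite !mulmxN !mulNmx scalerN mulNmx mulmxN !opprK opprD.
  by rewrite !mulmxA.
have uP : P \in unitmx.
  by rewrite unitmxE det_lblock !det1 mulr1 unitr1.
have [J' hJ'] := IH S skS.
exists (invmx P *m block_mx J2 0 0 J' *m P).
apply: congr_ok => //; rewrite hP; exact: blk_ok.
Qed.


Lemma step k (A : 'M[R]_(2 + k)) :
  (forall S : 'M[R]_k, S^T = -S -> exists J, acs_ok S J) ->
  A^T = -A -> exists J, acs_ok A J.
Proof.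
move=> IH sk.
case: (boolP [exists i, exists j, A i j != 0]) => [/existsP [i /existsP [j nz]] | /existsPn h].
  have ij : i != j.
    by apply/eqP => eij; move: nz; rewrite eij skew_diag // eqxx.
  pose o0 := lshift k (0 : 'I_2); pose o1 := lshift k (1 : 'I_2).
  pose s1 := tperm o0 i; pose t := tperm o1 ((s1^-1)%g j); pose s := (t * s1)%g.
  have hs0 : s o0 = i.
    have ht0 : t o0 = o0.
      rewrite /t tpermD // eq_sym //.
      apply: contra ij => /eqP e; by rewrite -(permKV s1 j) -e tpermL eqxx.
    by rewrite permM ht0 tpermL.
  have hs1 : s o1 = j by rewrite permM tpermL permKV.
  pose B := perm_mx s *m A *m (perm_mx s)^T.
  have hB : forall x y, B x y = A (s x) (s y).
    by move=> x y; rewrite /B -row_permE tr_perm_mx -col_permE !mxE.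
  have skB : B^T = - B.
    by rewrite /B !trmx_mul trmxK sk mulNmx mulmxN mulmxA.
  have nzB : B (lshift k (0 : 'I_2)) (lshift k (1 : 'I_2)) != 0.
    by rewrite hB -/o0 -/o1 hs0 hs1.
  have [J hJ] := pivot IH skB nzB.
  exists (invmx (perm_mx s) *m J *m perm_mx s); apply: congr_ok => //.
  exact: unitmx_perm.
have A0 : A = 0.
  apply/matrixP => i j; have := h i; rewrite negb_exists => /forallP /(_ j).
  by rewrite negbK mxE => /eqP.
have sk0 : (0 : 'M[R]_k)^T = - 0 by rewrite trmx0 oppr0.
have [J' hJ'] := IH 0 sk0.
exists (block_mx J2 0 0 J'); rewrite A0.
have -> : (0 : 'M[R]_(2+k)) = block_mx (0 *: J2) 0 0 0 by rewrite scale0r block_mx0.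
exact: blk_ok.
Qed.

Lemma key n : ~~ odd n -> forall A : 'M[R]_n, A^T = -A -> exists J, acs_ok A J.
Proof.
move=> hn; rewrite -[n]odd_double_half (negbTE hn) add0n.
elim: n./2 => [|k IH].
  by move=> A sk; exists 0; split; apply/matrixP => -[m hm].
rewrite doubleS => A sk.
exact: (@step k.*2 A IH sk).
Qed.

End Key.


Theorem mainTheorem9 (R : realType) (n : nat)
  (br : 'rV[R]_n -> 'rV[R]_n -> 'rV[R]_n) :
  is_lie_bracket br -> ~~ odd n -> \rank (derived_space br) = 1%N ->
  exists J : 'M[R]_n, abelian_complex_structure br J.
Proof.
move=> [hl hr hxx _] hn hrk.
set D := derived_space br in hrk.
have [i0 nzr] : exists i0, row i0 D != 0.
  apply/existsP; apply: contraT; rewrite negb_exists => /forallP h.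
  have D0 : D = 0.
    by apply/row_matrixP => i; rewrite row0; apply/eqP; have := h i; rewrite negbK.
  by move: hrk; rewrite D0 mxrank0.
set z := row i0 D.
have hDz : (D <= z)%MS.
  have e := mxrank_leqif_eq (row_sub i0 D).
  have : (z == D)%MS by rewrite -(geq_leqif e) hrk rank_rV nzr.
  by case/andP.
have hsub : forall i j, (br (delta_mx 0 i) (delta_mx 0 j) <= z)%MS.
  move=> i j; apply: submx_trans hDz.
  apply: (sumsmx_sup i) => //; apply: (sumsmx_sup j) => //.
  by rewrite genmxE.
pose c i j := (br (delta_mx 0 i) (delta_mx 0 j) *m pinvmx z) 0 0.
have hc : forall i j, br (delta_mx 0 i) (delta_mx 0 j) = c i j *: z.
  move=> i j; rewrite -{1}(mulmxKpV (hsub i j)).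
  by rewrite [_ *m pinvmx z]mx11_scalar mul_scalar_mx.
have br0l : forall w, br 0 w = 0.
  move=> w; have := hl 1 0 0 w; rewrite !scale1r addr0 => h.
  by have := congr1 (fun v => v - br 0 w) h; rewrite subrr addrK => <-.
have br0r : forall w, br w 0 = 0.
  move=> w; have := hr 1 0 0 w; rewrite !scale1r addr0 => h.
  by have := congr1 (fun v => v - br w 0) h; rewrite subrr addrK => <-.
have brDl : forall x y w, br (x + y) w = br x w + br y w.
  by move=> x y w; have := hl 1 x y w; rewrite !scale1r.
have brDr : forall x y w, br w (x + y) = br w x + br w y.
  by move=> x y w; have := hr 1 x y w; rewrite !scale1r.
have brZl : forall a x w, br (a *: x) w = a *: br x w.
  by move=> a x w; have := hl a x 0 w; rewrite !addr0 br0l addr0.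
have brZr : forall a x w, br w (a *: x) = a *: br w x.
  by move=> a x w; have := hr a x 0 w; rewrite !addr0 br0r addr0.
have anti : forall x y, br y x = - br x y.
  move=> x y; have := hxx (x + y); rewrite brDl !brDr !hxx add0r addr0.
  by move/eqP; rewrite addrC addr_eq0 => /eqP.
pose A := \matrix_(i, j) c i j.
have skA : A^T = - A.
  apply/matrixP => i j; rewrite !mxE /c anti mulNmx mxE.
  done.
have brx : forall x y, br x y = (x *m A *m y^T) 0 0 *: z.
  move=> x y.
  have lsum : forall (F : 'I_n -> 'rV[R]_n) w, br (\sum_i F i) w = \sum_i br (F i) w.
    by move=> F w; apply: (big_morph (fun v => br v w) (fun u v => brDl u v w) (br0l w)).
  have rsum : forall (F : 'I_n -> 'rV[R]_n) w, br w (\sum_i F i) = \sum_i br w (F i).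
    by move=> F w; apply: (big_morph (fun v => br w v) (fun u v => brDr u v w) (br0r w)).
  have -> : br x y = \sum_i \sum_j (x 0 i * y 0 j * c i j) *: z.
    rewrite {1}(row_sum_delta x) lsum; apply: eq_bigr => i _.
    rewrite brZl {1}(row_sum_delta y) rsum scaler_sumr; apply: eq_bigr => j _.
    by rewrite brZr hc !scalerA.
  have -> : (x *m A *m y^T) 0 0 = \sum_i \sum_j (x 0 i * y 0 j * c i j).
    rewrite mxE; under eq_bigr do rewrite !mxE big_distrl.
    rewrite exchange_big; apply: eq_bigr => i _; apply: eq_bigr => j _.
    by rewrite !mxE mulrAC.
  by rewrite scaler_suml; apply: eq_bigr => i _; rewrite scaler_suml.
have [J [hJ hJA]] := key hn skA.
exists J; split => // x y.
by rewrite !brx !trmx_mul !mulmxA -(mulmxA x J A) -(mulmxA x) hJA.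
Qed.
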